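(* Let $G$ be a group and $A$ a minimax-antifinitary $\mathbb{Z}G$-module. If $H$ is a proper subgroup of $G$ which is not contained in $\mathbf{Coc}_{\mathbb{Z}\text{-mmx}}(G)$, then $H$ is finitely generated.
   Context: An $R$-module is minimax if it has a finite series of submodules whose factors are each noetherian or artinian. For a subgroup $H$ of $G$, $C_A(H)$ is the set of elements of $A$ fixed by all of $H$. $\mathbf{Coc}_{\mathbb{Z}\text{-mmx}}(G) = \{x \in G \mid A/C_A(x) \text{ is a minimax } \mathbb{Z}\text{-module}\}$. A $\mathbb{Z}G$-module $A$ is minimax-antifinitary if $A/C_A(H)$ is a minimax $\mathbb{Z}$-module for every proper subgroup $H$ of $G$ that is not finitely generated, while $A/C_A(G)$ is not a minimax $\mathbb{Z}$-module. *)

(* Defs.v *)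
From HB Require Import structures.
From Stdlib Require List.
From mathcomp Require Import all_boot all_algebra.
Set Implicit Arguments. Unset Strict Implicit. Unset Printing Implicit Defensive.
Import GRing.Theory.
Local Open Scope ring_scope.

Record group := Group {
  gcar :> Type;
  gmul : gcar -> gcar -> gcar;
  gone : gcar;
  ginv : gcar -> gcar;
  gmulA : forall x y z, gmul x (gmul y z) = gmul (gmul x y) z;
  gmul1x : forall x, gmul gone x = x;
  gmulx1 : forall x, gmul x gone = x;
  gmulVx : forall x, gmul (ginv x) x = gone;
  gmulxV : forall x, gmul x (ginv x) = gone
}.

Definition is_subgroup (G : group) (H : G -> Prop) : Prop :=
  H (gone G) /\ (forall x y, H x -> H y -> H (gmul x y)) /\
  (forall x, H x -> H (ginv x)).

Definition proper_subgroup (G : group) (H : G -> Prop) : Prop :=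
  is_subgroup H /\ exists g : G, ~ H g.

Definition gen_by (G : group) (s : list G) (x : G) : Prop :=
  forall K : G -> Prop, is_subgroup K -> (forall y, List.In y s -> K y) -> K x.

Definition fin_generated (G : group) (H : G -> Prop) : Prop :=
  exists s : list G, forall x, H x <-> gen_by s x.

Definition ZG_action (G : group) (A : zmodType) (act : A -> G -> A) : Prop :=
  (forall a b g, act (a + b) g = act a g + act b g) /\
  (forall a, act a (gone G) = a) /\
  (forall a g h, act a (gmul g h) = act (act a g) h).

Definition centA (G : group) (A : zmodType) (act : A -> G -> A)
  (H : G -> Prop) (a : A) : Prop :=
  forall h, H h -> act a h = a.

Definition is_addsub (A : zmodType) (B : A -> Prop) : Prop :=
  B 0 /\ (forall a b, B a -> B b -> B (a - b)).

(* The factor Y/X (X <= Y subgroups) is noetherian, resp. artinian, Z-module: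
   by the correspondence theorem, subgroups of Y/X are subgroups K of A with
   X <= K <= Y. *)
Definition between (A : zmodType) (X Y K : A -> Prop) : Prop :=
  is_addsub K /\ (forall a, X a -> K a) /\ (forall a, K a -> Y a).

Definition noetherian_factor (A : zmodType) (X Y : A -> Prop) : Prop :=
  forall K : nat -> A -> Prop,
    (forall n, between X Y (K n)) ->
    (forall n a, K n a -> K n.+1 a) ->
    exists m, forall n a, (m <= n)%N -> (K n a <-> K m a).

Definition artinian_factor (A : zmodType) (X Y : A -> Prop) : Prop :=
  forall K : nat -> A -> Prop,
    (forall n, between X Y (K n)) ->
    (forall n a, K n.+1 a -> K n a) ->
    exists m, forall n a, (m <= n)%N -> (K n a <-> K m a).

(* A/B is a minimax Z-module (B a subgroup of A): there is a finite series
   B = B_0 <= B_1 <= ... <= B_n = A of subgroups (i.e. a series of submodules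
   of A/B) with each factor B_(i+1)/B_i noetherian or artinian. *)
Definition minimax_quot (A : zmodType) (B : A -> Prop) : Prop :=
  exists (n : nat) (S : nat -> A -> Prop),
    (forall a, S 0%N a <-> B a) /\
    (forall a, S n a) /\
    (forall i, (i <= n)%N -> is_addsub (S i)) /\
    (forall i a, (i < n)%N -> S i a -> S i.+1 a) /\
    (forall i, (i < n)%N ->
       noetherian_factor (S i) (S i.+1) \/ artinian_factor (S i) (S i.+1)).

Definition Coc_mmx (G : group) (A : zmodType) (act : A -> G -> A) (x : G) : Prop :=
  minimax_quot (centA act (fun g => g = x)).

Definition minimax_antifinitary (G : group) (A : zmodType) (act : A -> G -> A)
  : Prop :=
  (forall H : G -> Prop, proper_subgroup H -> ~ fin_generated H ->
     minimax_quot (centA act H)) /\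
  ~ minimax_quot (centA act (fun _ : G => True)).

(* Main.v *)
Require Import Defs.
From mathcomp Require Import all_boot all_algebra.
From Stdlib Require Import Classical.
Set Implicit Arguments. Unset Strict Implicit.
Import GRing.Theory.
Local Open Scope ring_scope.

Lemma as_add (A : zmodType) (B : A -> Prop) a b :
  is_addsub B -> B a -> B b -> B (a + b).
Proof.
move=> [B0 Bs] Ha Hb.
have := Bs a (0 - b) Ha (Bs 0 b B0 Hb).
by rewrite sub0r opprK.
Qed.

Lemma as_sub (A : zmodType) (B : A -> Prop) a b :
  is_addsub B -> B a -> B b -> B (a - b).
Proof. by move=> [B0 Bs]; apply: Bs. Qed.

Definition plusS (A : zmodType) (X Y : A -> Prop) (a : A) : Prop :=
  exists s b, X s /\ Y b /\ a = s + b.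

Lemma plusS_addsub (A : zmodType) (X Y : A -> Prop) :
  is_addsub X -> is_addsub Y -> is_addsub (plusS X Y).
Proof.
move=> hX hY; split.
  by exists 0, 0; split; [case: hX|split; [case: hY|rewrite addr0]].
move=> a b [s [c [Hs [Hc ->]]]] [s' [c' [Hs' [Hc' ->]]]].
exists (s - s'), (c - c'); split; first exact: as_sub.
split; first exact: as_sub.
by rewrite opprD addrACA.
Qed.

Lemma transfer (A : zmodType) (X Y B : A -> Prop) (Kn Km : A -> Prop) :
  is_addsub B ->
  between (plusS X B) (plusS Y B) Kn ->
  between (plusS X B) (plusS Y B) Km ->
  (forall a, X a -> Y a) -> is_addsub X ->
  (forall y, Kn y /\ Y y -> Km y /\ Y y) ->
  forall a, Kn a -> Km a.
Proof.
move=> hB [hKn [XKn KnY]] [hKm [XKm KmY]] XY hX H a Ha.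
have [y [b [Hy [Hb Hab]]]] := KnY a Ha.
have XBb : plusS X B b by exists 0, b; split; [case: hX|split=>//; rewrite add0r].
have Hy' : Kn y.
  have := as_sub hKn Ha (XKn _ XBb). by rewrite Hab addrK.
have [Hmy _] := H y (conj Hy' Hy).
rewrite Hab; apply: as_add => //; exact: XKm.
Qed.

Lemma factor_mono (A : zmodType) (X Y B : A -> Prop) :
  is_addsub B -> is_addsub X -> is_addsub Y -> (forall a, X a -> Y a) ->
  (noetherian_factor X Y -> noetherian_factor (plusS X B) (plusS Y B)) /\
  (artinian_factor X Y -> artinian_factor (plusS X B) (plusS Y B)).
Proof.
move=> hB hX hY XY.
have betw : forall K, between (plusS X B) (plusS Y B) K ->
    between X Y (fun a => K a /\ Y a).
  move=> K [hK [XK KY]]; split.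
    split; first by split; [case: hK|case: hY].
    by move=> a b [Ka Ya] [Kb Yb]; split; apply: as_sub.
  split; last by move=> a [].
  move=> a Xa; split; last exact: XY.
  by apply: XK; exists a, 0; split=>//; split; [case: hB|rewrite addr0].
split.
- move=> HN K HK Hmono.
  have [m Hm] := HN (fun n a => K n a /\ Y a) (fun n => betw _ (HK n))
    (fun n a '(conj Ka Ya) => conj (Hmono n a Ka) Ya).
  exists m => n a Hmn; split.
    apply: (transfer hB (HK n) (HK m) XY hX) => y Hy.
    exact: (proj1 (Hm n y Hmn) Hy).
  apply: (transfer hB (HK m) (HK n) XY hX) => y Hy.
  exact: (proj2 (Hm n y Hmn) Hy).
- move=> HN K HK Hmono.
  have [m Hm] := HN (fun n a => K n a /\ Y a) (fun n => betw _ (HK n))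
    (fun n a '(conj Ka Ya) => conj (Hmono n a Ka) Ya).
  exists m => n a Hmn; split.
    apply: (transfer hB (HK n) (HK m) XY hX) => y Hy.
    exact: (proj1 (Hm n y Hmn) Hy).
  apply: (transfer hB (HK m) (HK n) XY hX) => y Hy.
  exact: (proj2 (Hm n y Hmn) Hy).
Qed.

Lemma minimax_mono (A : zmodType) (B B' : A -> Prop) :
  is_addsub B' -> (forall a, B a -> B' a) -> minimax_quot B -> minimax_quot B'.
Proof.
move=> hB' BB' [n [S [S0 [Sn [Sadd [Smon Sfac]]]]]].
exists n, (fun i => plusS (S i) B'); split.
  move=> a; split.
    move=> [s [b [Hs [Hb ->]]]]; apply: as_add => //; apply: BB'; exact/S0.
  move=> Ha; exists 0, a; split; last by rewrite add0r.
  by case: (Sadd 0%N isT).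
split.
  by move=> a; exists a, 0; split=>//; split; [case: hB'|rewrite addr0].
split; first by move=> i Hi; apply: plusS_addsub => //; exact: Sadd.
split.
  by move=> i a Hi [s [b [Hs [Hb ->]]]]; exists s, b; split=>//; apply: Smon.
move=> i Hi.
have [FN FA] := factor_mono hB' (Sadd i (ltnW Hi)) (Sadd i.+1 Hi) (Smon i ^~ Hi).
by case: (Sfac i Hi) => H; [left; apply: FN|right; apply: FA].
Qed.

Theorem lemma2p8 (G : group) (A : zmodType) (act : A -> G -> A)
  (Hact : ZG_action act) (Hanti : minimax_antifinitary act)
  (H : G -> Prop) (HH : proper_subgroup H)
  (Hnot : ~ (forall x : G, H x -> Coc_mmx act x)) :
  fin_generated H.
Proof.
apply: NNPP => Hfg; apply: Hnot => x Hx.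
have Hm := (proj1 Hanti) H HH Hfg.
case: Hact => [Hadd [_ _]].
have act0 : forall g, act 0 g = 0.
  move=> g; have h := Hadd 0 0 g; rewrite addr0 in h.
  by rewrite -{1}[act 0 g]addr0 in h; exact: esym (addrI _ h).
have actN : forall a g, act (- a) g = - act a g.
  move=> a g; apply/eqP; rewrite -subr_eq0 opprK -Hadd addNr act0 //.
apply: minimax_mono Hm.
  split; first by move=> h ->; exact: act0.
  by move=> a b Ha Hb h Hh; rewrite Hadd actN Ha // Hb.
by move=> a Ha h ->; apply: Ha.
Qed.
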